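(* Let $d\in\Lambda$ be a root ($d^2=-2$), $d^\perp$ its orthogonal complement in $\Lambda$, and $O^+(\Lambda)_d=\{g\in O^+(\Lambda):g(d)=d\}$. Then the restriction map $O^+(\Lambda)_d\ni g\mapsto g|_{d^\perp}\in O^+(d^\perp)$ is surjective.
   Context: $\Lambda=\mathbb U(2)\oplus\mathbb U\oplus\mathbb E_8(2)$ ($\mathbb U$ hyperbolic plane, $\mathbb E_8$ negative-definite, $(2)$ scaling). For a lattice $L$ of signature $(2,n)$, $\Omega_L$ is $\{[\omega]\in\mathbf P(L\otimes\mathbb C):\omega^2=0,\langle\omega,\bar\omega\rangle>0\}$, which has two components, and $O^+(L)$ is the index-2 subgroup of $O(L)$ preserving each component. The component $\Omega^+_{d^\perp}$ is chosen to be $\{\omega\in\Omega^+_\Lambda:\langle\omega,d\rangle=0\}$. *)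

(* Defs.v *)
From HB Require Import structures.
From mathcomp Require Import all_boot all_order all_algebra.
From mathcomp Require Import all_classical all_reals all_analysis.
From mathcomp Require Import Rstruct Rstruct_topology.
Set Implicit Arguments. Unset Strict Implicit. Unset Printing Implicit Defensive.
Import Order.TTheory GRing.Theory Num.Theory.
Local Open Scope ring_scope.
Local Open Scope classical_set_scope.

(* Lattices are given by integer Gram matrices Q : 'M[int]_n;
   vectors are row vectors, b(v,w) = v Q w^T; an endomorphism is a matrix
   acting on the right, v |-> v *m g. *)

Definition bil n (Q : 'M[int]_n) (v w : 'rV[int]_n) : int :=
  (v *m Q *m w^T) 0 0.

Definition bilR n (Q : 'M[int]_n) (v w : 'rV[Rdefinitions.R]_n) : Rdefinitions.R :=
  (v *m map_mx intr Q *m w^T) 0 0.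

(* The affine cone over Omega_L inside L (x) C, where omega = x + i y is
   encoded by the pair (x, y) of real vectors:
   omega^2 = 0  <->  x.x = y.y /\ x.y = 0,   <omega, conj omega> = x.x + y.y > 0 *)
Definition period_cone n (Q : 'M[int]_n) : set ('rV[Rdefinitions.R]_n * 'rV[Rdefinitions.R]_n) :=
  [set p | bilR Q p.1 p.1 = bilR Q p.2 p.2 /\ bilR Q p.1 p.2 = 0 /\
           0 < bilR Q p.1 p.1 + bilR Q p.2 p.2].

Definition orthogonal_group n (Q : 'M[int]_n) : pred 'M[int]_n :=
  fun g => (g \in unitmx) && (g *m Q *m g^T == Q).

(* O^+(L): isometries preserving each connected component of Omega_L
   (equivalently, of its affine cone in L (x) C = R^n x R^n) *)
Definition Oplus n (Q : 'M[int]_n) (g : 'M[int]_n) : Prop :=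
  orthogonal_group Q g /\
  forall p, period_cone Q p ->
    connected_component (period_cone Q) p
      (p.1 *m map_mx intr g, p.2 *m map_mx intr g).

(* The Gram matrix of Lambda = U(2) + U + E_8(2) (E_8 negative definite) *)
Definition e8_edge (i j : nat) : bool :=
  [|| (i == 0) && (j == 2), (i == 2) && (j == 3), (i == 3) && (j == 4),
      (i == 4) && (j == 5), (i == 5) && (j == 6), (i == 6) && (j == 7)
    | (i == 1) && (j == 3)]%N.

Definition lambda_entry (i j : nat) : int :=
  if (i < 2)%N && (j < 2)%N then (if i == j then 0 else 2)
  else if (2 <= i < 4)%N && (2 <= j < 4)%N then (if i == j then 0 else 1)
  else if (4 <= i)%N && (4 <= j)%N then
    (if i == j then -4
     else if e8_edge (i - 4) (j - 4) || e8_edge (j - 4) (i - 4) then 2 else 0)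
  else 0.

Definition gramLambda : 'M[int]_12 := \matrix_(i, j) lambda_entry i j.

Definition Zbasis_perp (d : 'rV[int]_12) (B : 'M[int]_(11, 12)) : Prop :=
  (forall i, bil gramLambda (row i B) d = 0) /\
  (forall v : 'rV[int]_12, bil gramLambda v d = 0 -> exists c : 'rV[int]_11, v = c *m B) /\
  (forall c : 'rV[int]_11, c *m B = 0 -> c = 0).

Definition gramPerp (B : 'M[int]_(11, 12)) : 'M[int]_11 := B *m gramLambda *m B^T.

(* Main.v *)
Require Import Defs.
From mathcomp Require Import all_boot all_order all_algebra.
From mathcomp Require Import all_classical all_reals all_analysis.
From mathcomp Require Import zify ring lra.
From mathcomp Require Import Rstruct Rstruct_topology.
Set Implicit Arguments. Unset Strict Implicit. Unset Printing Implicit Defensive.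
Import Order.TTheory GRing.Theory Num.Theory.
Local Open Scope ring_scope.

Definition gb (R : comPzRingType) n (M : 'M[R]_n) (a b : 'rV[R]_n) : R :=
  (a *m M *m b^T) 0 0.

Section GB.
Variables (R : comPzRingType) (n : nat) (M : 'M[R]_n).
Implicit Types a b c : 'rV[R]_n.
Lemma gbDl a b c : gb M (a + b) c = gb M a c + gb M b c.
Proof. by rewrite /gb !mulmxDl mxE. Qed.
Lemma gbDr a b c : gb M a (b + c) = gb M a b + gb M a c.
Proof. by rewrite /gb linearD /= mulmxDr mxE. Qed.
Lemma gbZl k a c : gb M (k *: a) c = k * gb M a c.
Proof. by rewrite /gb -!scalemxAl mxE. Qed.
Lemma gbZr k a c : gb M a (k *: c) = k * gb M a c.
Proof. by rewrite /gb linearZ /= -scalemxAr mxE. Qed.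
Lemma gbNl a c : gb M (- a) c = - gb M a c.
Proof. by rewrite -scaleN1r gbZl mulN1r. Qed.
Lemma gbNr a c : gb M a (- c) = - gb M a c.
Proof. by rewrite -scaleN1r gbZr mulN1r. Qed.
Lemma gbBl a b c : gb M (a - b) c = gb M a c - gb M b c.
Proof. by rewrite gbDl gbNl. Qed.
Lemma gbBr a b c : gb M a (b - c) = gb M a b - gb M a c.
Proof. by rewrite gbDr gbNr. Qed.
Lemma gb0l c : gb M 0 c = 0.
Proof. by rewrite /gb !mul0mx mxE. Qed.
Lemma gb0r c : gb M c 0 = 0.
Proof. by rewrite /gb trmx0 mulmx0 mxE. Qed.
Lemma gb_tr a b : gb M^T a b = gb M b a.
Proof.
rewrite /gb; have -> : (b *m M *m a^T) 0 0 = ((b *m M *m a^T)^T) 0 0.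
  by set X := (b *m M *m a^T); rewrite [X^T 0 0]mxE.
by rewrite !trmx_mul trmxK mulmxA.
Qed.
Lemma gb_sym a b : M^T = M -> gb M a b = gb M b a.
Proof. by move=> MT; rewrite -gb_tr MT. Qed.
Lemma gb_mul m (N : 'M[R]_(m, n)) (a b : 'rV[R]_m) :
  gb M (a *m N) (b *m N) = gb (N *m M *m N^T) a b.
Proof. by rewrite /gb trmx_mul !mulmxA. Qed.
Lemma gb_entry i j : M i j = gb M (delta_mx 0 i) (delta_mx 0 j).
Proof. by rewrite /gb -rowE trmx_delta -colE !mxE. Qed.
Lemma gb_delta_r a j : gb M a (delta_mx 0 j) = (a *m M) 0 j.
Proof. by rewrite /gb trmx_delta -colE !mxE. Qed.
Lemma gb_addM (N : 'M[R]_n) a b : gb (M + N) a b = gb M a b + gb N a b.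
Proof. by rewrite /gb mulmxDr mulmxDl mxE. Qed.
Lemma gb_scaleM k a b : gb (k *: M) a b = k * gb M a b.
Proof. by rewrite /gb -scalemxAr -scalemxAl mxE. Qed.
End GB.

Lemma gb_delta (R : comPzRingType) n (i j : 'I_n) (a b : 'rV[R]_n) :
  gb (delta_mx i j) a b = a 0 i * b 0 j.
Proof.
rewrite /gb -(@mul_delta_mx _ n 1 n 0 i j) mulmxA -colE -mulmxA -rowE.
by rewrite !mxE big_ord1 !mxE.
Qed.

Lemma gb_mx_eq (R : comPzRingType) n (M N : 'M[R]_n) :
  (forall a b, gb M a b = gb N a b) -> M = N.
Proof. by move=> H; apply/matrixP => i j; rewrite !gb_entry H. Qed.

Lemma check12 (P : nat -> nat -> bool) :
  all (fun i => all (P i) (iota 0 12)) (iota 0 12) -> forall i j : 'I_12, P i j.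
Proof.
move=> /allP H i j; have Hi : (nat_of_ord i \in iota 0 12) by rewrite mem_iota ltn_ord.
have /allP := H i Hi.
by apply; rewrite mem_iota ltn_ord.
Qed.

Definition Lent (i j : nat) : int :=
  if (i < j)%N then (if (i == 2%N) && (j == 3%N) then 0 else (lambda_entry i j %/ 2)%Z)
  else if i == j then (lambda_entry i i %/ 4)%Z else 0.
Definition Lm : 'M[int]_12 := \matrix_(i, j) Lent i j.
Definition i2 : 'I_12 := @Ordinal 12 2 isT.
Definition i3 : 'I_12 := @Ordinal 12 3 isT.

Lemma gram_sym : gramLambda^T = gramLambda.
Proof.
apply/matrixP => i j; rewrite !mxE.
apply/eqP; apply: (@check12 (fun i j => lambda_entry j i == lambda_entry i j)).
by vm_compute.
Qed.

Lemma gram_dec : gramLambda = 2%:Z *: (Lm + Lm^T) + (delta_mx i2 i3 + delta_mx i3 i2).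
Proof.
apply/matrixP => i j; rewrite !mxE.
apply/eqP; apply: (@check12 (fun i j => lambda_entry i j == 2%:Z * (Lent i j + Lent j i) +
   (((i == 2%N) && (j == 3%N))%:R + ((i == 3%N) && (j == 2%N))%:R))).
by vm_compute.
Qed.

Notation bq := (gb gramLambda).

Lemma bil_dec a b : bq a b = 2 * (gb Lm a b + gb Lm b a) + (a 0 i2 * b 0 i3 + a 0 i3 * b 0 i2).
Proof.
by rewrite [in LHS]gram_dec gb_addM gb_scaleM gb_addM gb_tr gb_addM !gb_delta.
Qed.

Lemma bq_sym a b : bq a b = bq b a.
Proof. exact/gb_sym/gram_sym. Qed.

Lemma rQ_expand (r : 'rV[int]_12) (j : 'I_12) :
  (r *m gramLambda) 0 j = \sum_(k < 12) r 0 (inord k) * lambda_entry k j.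
Proof. by rewrite mxE; apply: eq_bigr => k _; rewrite inord_val mxE. Qed.

Lemma R4 (r : 'rV[int]_12) :
  (forall j, (4 %| (r *m gramLambda) ord0 j)%Z) -> forall i, (2 %| r ord0 i)%Z.
Proof.
move=> H.
have E : forall j : nat, (j < 12)%N -> (4 %| \sum_(k < 12) r ord0 (inord k) * lambda_entry k j)%Z.
  by move=> j hj; have := H (Ordinal hj); rewrite rQ_expand.
move: (E 0%N isT) (E 1%N isT) (E 2%N isT) (E 3%N isT) (E 4%N isT) (E 5%N isT)
  (E 6%N isT) (E 7%N isT) (E 8%N isT) (E 9%N isT) (E 10%N isT) (E 11%N isT).
rewrite !big_ord_recl big_ord0 /= /lambda_entry /= ?mulr0 ?addr0 ?add0r ?mulr1 /bump /= ?addn0 ?add1n.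
move=> h0 h1 h2 h3 h4 h5 h6 h7 h8 h9 h10 h11 i; rewrite -[i]inord_val; case: i => [k hk] /=.
do 12 (case: k hk => [|k] hk; first lia).
by [].
Qed.

Lemma parity (x : int) : exists m, x = 2 * m \/ x = 2 * m + 1.
Proof. by exists (x %/ 2)%Z; lia. Qed.



Lemma zmod_aux (V : zmodType) (X W Y : V) : X - (W + (X - Y)) = Y - W.
Proof. by rewrite opprD opprB addrCA [X + _]addrC subrK addrC. Qed.

Lemma alg_ext (d : 'rV[int]_12) (hd : bq d d = -2) (B : 'M[int]_(11,12))
  (hB : Zbasis_perp d B) (h : 'M[int]_11) (hu : h \in unitmx)
  (hiso : h *m gramPerp B *m h^T = gramPerp B) :
  exists g : 'M[int]_12, [/\ g \in unitmx, g *m gramLambda *m g^T = gramLambda,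
     d *m g = d & B *m g = h *m B] /\
  exists (Dc : 'M[int]_(12, 11)) (z : 'rV[int]_12), Dc *m B + gramLambda *m d^T *m z = 1%:M.
Proof.
case: hB => hB1 [hB2 hB3].
have BQd : B *m gramLambda *m d^T = 0.
  apply/matrixP => i j; rewrite (ord1 j) [RHS]mxE -(hB1 i) /bil -!row_mul.
  by set X := B *m _ *m _; rewrite [row i X 0 0]mxE.
have hB1' : forall c, bq (c *m B) d = 0.
  move=> c; rewrite /gb.
  have -> : c *m B *m gramLambda *m d^T = c *m (B *m gramLambda *m d^T) by rewrite !mulmxA.
  by rewrite BQd mulmx0 mxE.
have hB2' : forall v, bq v d = 0 -> exists c, v = c *m B by [].
have bP : forall a b, gb (gramPerp B) a b = bq (a *m B) (b *m B).
  by move=> a b; rewrite gb_mul.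
have bh : forall a b, bq (a *m h *m B) (b *m h *m B) = bq (a *m B) (b *m B).
  by move=> a b; rewrite -!bP gb_mul hiso.
set x2 := d 0 i2; set x3 := d 0 i3.
have hd2 : 2 * (gb Lm d d + gb Lm d d) + (x2 * x3 + x3 * x2) = -2 by rewrite -hd bil_dec.
have [p E2] : exists p, x2 = 2 * p + 1.
  case: (parity x2) => p [] E; last by exists p.
  by exfalso; rewrite E in hd2; nia.
have [q E3] : exists q, x3 = 2 * q + 1.
  case: (parity x3) => q [] E; last by exists q.
  by exfalso; rewrite E in hd2; nia.
set e3 : 'rV[int]_12 := delta_mx 0 i3.
have e3d : bq e3 d = 2 * (gb Lm e3 d + gb Lm d e3) + x2.
  by rewrite bil_dec /e3 !mxE /=; ring.
set m := gb Lm e3 d + gb Lm d e3 + p.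
set z := e3 + m *: d.
have zd : bq z d = 1.
  rewrite /z gbDl gbZl e3d hd E2 /m; ring.
have key4 : forall w, bq w d = 0 -> (4 %| 2 * bq z w - bq w w)%Z.
  move=> w wd.
  have wd' := wd; rewrite bil_dec -/x2 -/x3 E2 E3 in wd'.
  rewrite /z gbDl gbZl (bq_sym d w) wd mulr0 addr0 !bil_dec /e3 !mxE /=.
  rewrite ?mul0r ?mul1r ?add0r ?addr0.
  case: (parity (w 0 i2)) => a [] Ea; case: (parity (w 0 i3)) => b [] Eb;
    rewrite Ea Eb in wd' *; nia.
clearbody z.
have vd : bq (d + 2 *: z) d = 0.
  by rewrite gbDl gbZl zd hd; lia.
have [cv Ecv] := hB2 _ vd.
have Hz : forall x, 2 * bq (x *m B) z = bq (x *m B) (cv *m B).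
  by move=> x; rewrite -Ecv gbDr gbZr hB1'; lia.
have k4 : forall c, (4 %| bq (cv *m B) (c *m B) - bq (c *m B) (c *m B))%Z.
  move=> c; rewrite -Ecv; have := key4 (c *m B) (hB1' c).
  by rewrite gbDl gbZl (bq_sym d) hB1' add0r.
set hi := invmx h.
have hih : hi *m h = 1%:M by rewrite /hi mulVmx.
set delta := cv *m h - cv.
set u := delta *m B.
have EU : u = cv *m h *m B - cv *m B by rewrite /u /delta mulmxBl.
have key : forall c, (4 %| bq u (c *m B))%Z.
  move=> c; rewrite EU gbBl.
  have e1 : bq (cv *m h *m B) (c *m B) = bq (cv *m B) (c *m hi *m B).
    by rewrite -[in RHS]bh -(mulmxA c hi h) hih mulmx1.
  have e2 : bq (c *m B) (c *m B) = bq (c *m hi *m B) (c *m hi *m B).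
    by rewrite -[in RHS]bh -(mulmxA c hi h) hih mulmx1.
  have := k4 c; have := k4 (c *m hi); rewrite e1 e2; lia.
have [t ht] : exists t, bq u z = 2 * t.
  have H4 := key cv; rewrite /u -Hz -/u in H4.
  by exists (bq u z %/ 2)%Z; lia.
have decomp : forall y, exists cy, y = cy *m B + bq y d *: z.
  move=> y; have yd : bq (y - bq y d *: z) d = 0 by rewrite gbBl gbZl zd mulr1 subrr.
  have [cy Ecy] := hB2 _ yd.
  by exists cy; rewrite -Ecy subrK.
set r := u - (2 * t) *: d.
have r4 : forall y, (4 %| bq r y)%Z.
  move=> y; have [cy Ey] := decomp y.
  rewrite /r gbBl gbZl (bq_sym d y).
  set k := bq y d in Ey *.
  rewrite [in bq u y]Ey gbDr gbZr ht; have := key cy; lia.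
have r2 : forall i, (2 %| r ord0 i)%Z.
  apply: R4 => j; rewrite -gb_delta_r; exact: r4.
set r' : 'rV[int]_12 := \row_i (r ord0 i %/ 2)%Z.
have Er : r = 2 *: r'.
  apply/rowP => i; move: (r2 i); rewrite [(2 *: r') ord0 i]mxE [r' ord0 i]mxE.
  by move: (r ord0 i) => x hx; rewrite mulrC divzK.
set w' := r' + t *: d.
have Eu : u = 2 *: w'.
  by rewrite /w' scalerDr -Er scalerA /r subrK.
have w'd : bq w' d = 0.
  have : bq u d = 0 by rewrite /u hB1'.
  by rewrite Eu gbZl; lia.
have [cw Ecw] := hB2 w' w'd.
have Edelta : delta = 2 *: cw.
  apply/eqP; rewrite -subr_eq0; apply/eqP/hB3.
  by rewrite mulmxBl -/u Eu Ecw scalemxAl subrr.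
set z' := z + cw *m B.
have [f Hf] := choice (fun i : 'I_12 => decomp (delta_mx 0 i)).
set Dc : 'M[int]_(12, 11) := \matrix_(i, j) f i 0 j.
set Dk : 'M[int]_(12, 1) := gramLambda *m d^T.
set D : 'M[int]_(12, 11 + 1) := row_mx Dc Dk.
set C : 'M[int]_(11 + 1, 12) := col_mx B z.
have DC : D *m C = 1%:M.
  rewrite /D /C mul_row_col; apply/row_matrixP => i.
  rewrite row1 linearD /= (row_mul i Dc) (row_mul i Dk).
  have -> : row i Dc = f i by apply/rowP => j; rewrite !mxE.
  have -> : row i Dk = (bq (delta_mx 0 i) d)%:M.
    by rewrite /Dk row_mul rowE [LHS]mx11_scalar.
  by rewrite mul_scalar_mx -Hf.
have [Du Cu] := mulmx1_unit DC.
have CD : C *m D = 1%:M := mulmx1C DC.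
set E : 'M[int]_(11 + 1) := block_mx h 0 cw 1%:M.
have Eun : E \in unitmx.
  by rewrite unitmxE det_lblock det1 mulr1 -unitmxE.
set g : 'M[int]_12 := D *m (E *m C).
have gu : g \in unitmx by rewrite !unitmx_mul Du Eun Cu.
have BD : B *m D = row_mx 1%:M 0.
  have -> : B = row_mx 1%:M 0 *m C by rewrite /C mul_row_col mul1mx mul0mx addr0.
  by rewrite -mulmxA CD mulmx1.
have zD : z *m D = row_mx 0 1%:M.
  have -> : z = row_mx 0 1%:M *m C by rewrite /C mul_row_col mul1mx mul0mx add0r.
  by rewrite -mulmxA CD mulmx1.
have Bg : B *m g = h *m B.
  rewrite /g mulmxA BD mulmxA /E mul_row_block /C mul_row_col.
  by rewrite !mul1mx !mul0mx !addr0 mul0mx addr0.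
have zg : z *m g = z'.
  rewrite /g mulmxA zD mulmxA /E mul_row_block /C mul_row_col.
  by rewrite !mul1mx !mul0mx !add0r mul1mx addrC.
have cBg : forall c : 'rV[int]_11, c *m B *m g = c *m h *m B.
  by move=> c; rewrite -mulmxA Bg mulmxA.
have dg : d *m g = d.
  have Ed : d = cv *m B - 2 *: z by rewrite -Ecv addrK.
  rewrite {1}Ed mulmxBl cBg -scalemxAl zg /z' scalerDr.
  rewrite scalemxAl -Edelta /delta mulmxBl.
  by rewrite Ed zmod_aux.
have EU2 : u = 2 *: (cw *m B) by rewrite /u Edelta -scalemxAl.
have F2 : forall c, bq (c *m h *m B) z' = bq (c *m B) z.
  move=> c.
  have H1 := Hz (c *m h).
  have H2 := Hz c.
  have H3 : bq (c *m h *m B) u = bq (c *m h *m B) (cv *m h *m B) - bq (c *m h *m B) (cv *m B).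
    by rewrite EU gbBr.
  have H4 : bq (c *m h *m B) u = 2 * bq (c *m h *m B) (cw *m B) by rewrite EU2 gbZr.
  have H5 := bh c cv.
  rewrite /z' gbDr.
  lia.
have F3 : bq z' z' = bq z z.
  have H1 := Hz cw.
  have H2 : bq u (cv *m B) = 2 * bq (cw *m B) (cv *m B) by rewrite EU2 gbZl.
  have H3 : bq u (cv *m B) = bq (cv *m h *m B) (cv *m B) - bq (cv *m B) (cv *m B).
    by rewrite EU gbBl.
  have H4 : bq u u = 4 * bq (cw *m B) (cw *m B) by rewrite EU2 gbZl gbZr mulrA.
  have H5 : bq u u = bq (cv *m h *m B) (cv *m h *m B) - bq (cv *m h *m B) (cv *m B)
     - bq (cv *m B) (cv *m h *m B) + bq (cv *m B) (cv *m B).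
    by rewrite EU gbBl !gbBr; lia.
  have H6 := bh cv cv.
  have H7 := bq_sym (cv *m B) (cv *m h *m B).
  have H8 := bq_sym z (cw *m B).
  rewrite /z' !gbDl !gbDr.
  lia.
have DC' : Dc *m B + gramLambda *m d^T *m z = 1%:M by rewrite -DC /D /C mul_row_col.
exists g; split; last by exists Dc, z.
split => //.
apply: gb_mx_eq => a b; rewrite -gb_mul.
have [ca Ea] := decomp a; have [cb Eb] := decomp b.
set ka := bq a d in Ea *; set kb := bq b d in Eb *.
rewrite Ea Eb !mulmxDl -!scalemxAl !cBg zg.
rewrite !gbDl !gbDr !gbZl !gbZr bh F2 F3.
rewrite (bq_sym z' (cb *m h *m B)) F2 (bq_sym z (cb *m B)).
lia.
Qed.

Section Wrap.
Import numFieldNormedType.Exports.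
Local Open Scope classical_set_scope.

Section Generic.
Variable R : realType.

Lemma cc_path (T : topologicalType) (A : set T) (f : R -> T) :
  continuous f -> (forall t : R, 0 <= t <= 1 -> A (f t)) ->
  connected_component A (f 0) (f 1).
Proof.
move=> fc fA.
have I0 : `[(0:R), 1]%classic 0 by rewrite /= in_itv /= lexx ler01.
have I1 : `[(0:R), 1]%classic 1 by rewrite /= in_itv /= lexx ler01.
exists (f @` `[(0:R), 1]%classic); last by exists 1.
split; first by exists 0.
- by move=> _ [t + <-]; rewrite /= in_itv /= => /fA.
- apply: connected_continuous_connected; last exact: continuous_subspaceT.
  by apply/connected_intervalP; exact: interval_is_interval.
Qed.

Lemma cc_map (T U : topologicalType) (A : set T) (B : set U) (phi : T -> U) :
  continuous phi -> (forall x, A x -> B (phi x)) ->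
  forall x y, connected_component A x y -> connected_component B (phi x) (phi y).
Proof.
move=> pc pAB x y [C [Cx CA cC] Cy].
exists (phi @` C); last by exists y.
split; first by exists x.
- by move=> _ [w Cw <-]; apply/pAB/CA.
- by apply: connected_continuous_connected cC _; exact: continuous_subspaceT.
Qed.

Lemma cont_sum (T : topologicalType) (V : normedModType R) k (F : 'I_k -> T -> V) :
  (forall i, continuous (F i)) -> continuous (fun x => \sum_(i < k) F i x).
Proof.
elim: k F => [|k IH] F HF.
  have -> : (fun x => \sum_(i < 0) F i x) = (fun=> 0) by apply/funext => x; rewrite big_ord0.
  exact: cst_continuous.
have -> : (fun x => \sum_(i < k.+1) F i x) =
   (fun x => \sum_(i < k) F (widen_ord (leqnSn k) i) x + F ord_max x).
  by apply/funext => x; rewrite big_ord_recr.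
move=> x; apply: cvgD; last exact: HF.
exact: (IH (fun i => F (widen_ord (leqnSn k) i))).
Qed.

Lemma mulmx_cont m n (M : 'M[R]_(m, n)) : continuous (fun c : 'rV[R]_m => c *m M).
Proof.
have -> : (fun c : 'rV[R]_m => c *m M) = (fun c => \sum_(i < m) c 0 i *: row i M).
  by apply/funext => c; rewrite mulmx_sum_row.
apply: cont_sum => i c; apply: continuousZr_tmp; exact: coord_continuous.
Qed.

Lemma pair_mulmx_cont m n (M : 'M[R]_(m, n)) :
  continuous (fun p : 'rV[R]_m * 'rV[R]_m => (p.1 *m M, p.2 *m M)).
Proof.
move=> p.
have cf : {for p, continuous fst} by apply: cvg_fst.
have cs : {for p, continuous snd} by apply: cvg_snd.
have h1 := continuous_comp cf (@mulmx_cont _ _ M p.1).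
have h2 := continuous_comp cs (@mulmx_cont _ _ M p.2).
exact: (cvg_pair h1 h2).
Qed.

Section RealCont.
Implicit Types f g : R -> R.
Lemma cont_c (c : R) : continuous (fun _ : R => c).
Proof. exact: cst_continuous. Qed.
Lemma cont_id : continuous (fun t : R => t).
Proof. by move=> t. Qed.
Lemma cont_add f g : continuous f -> continuous g -> continuous (fun t => f t + g t).
Proof. by move=> hf hg t; apply: cvgD; [exact: hf|exact: hg]. Qed.
Lemma cont_sub f g : continuous f -> continuous g -> continuous (fun t => f t - g t).
Proof. by move=> hf hg t; apply: cvgB; [exact: hf|exact: hg]. Qed.
Lemma cont_mul f g : continuous f -> continuous g -> continuous (fun t => f t * g t).
Proof. by move=> hf hg t; apply: cvgM; [exact: hf|exact: hg]. Qed.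
Lemma cont_inv f : (forall t, f t != 0) -> continuous f -> continuous (fun t => (f t)^-1).
Proof. by move=> nz hf t; apply: cvgV; [exact: nz|exact: hf]. Qed.
Lemma cont_sqrt f : continuous f -> continuous (fun t => Num.sqrt (f t)).
Proof. by move=> hf t; apply: continuous_comp; [exact: hf|exact: sqrt_continuous]. Qed.
Lemma cont_exp2 f : continuous f -> continuous (fun t => f t ^+ 2).
Proof. by move=> hf; apply: (cont_mul hf hf). Qed.
End RealCont.

Section VecCont.
Variable n : nat.
Implicit Types (f g : R -> 'rV[R]_n) (s : R -> R).
Lemma vcont_c (c : 'rV[R]_n) : continuous (fun _ : R => c).
Proof. exact: cst_continuous. Qed.
Lemma vcont_add f g : continuous f -> continuous g -> continuous (fun t => f t + g t).
Proof. by move=> hf hg t; apply: cvgD; [exact: hf|exact: hg]. Qed.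
Lemma vcont_sub f g : continuous f -> continuous g -> continuous (fun t => f t - g t).
Proof. by move=> hf hg t; apply: cvgB; [exact: hf|exact: hg]. Qed.
Lemma vcont_scale s f : continuous s -> continuous f -> continuous (fun t => s t *: f t).
Proof. by move=> hs hf t; apply: cvgZ; [exact: hs|exact: hf]. Qed.
Lemma vcont_pair f g : continuous f -> continuous g -> continuous (fun t => (f t, g t)).
Proof. by move=> hf hg t; exact: (cvg_pair (hf t) (hg t)). Qed.
End VecCont.

Definition sig (t : R) : R := t ^+ 2 / (t ^+ 2 + (1 - t) ^+ 2).
Lemma den_pos (t : R) : 0 < t ^+ 2 + (1 - t) ^+ 2.
Proof. nra. Qed.
Lemma sig01 (t : R) : 0 <= sig t <= 1.
Proof.
have hp := den_pos t; rewrite /sig; apply/andP; split.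
  by apply: divr_ge0; nra.
rewrite ler_pdivrMr // mul1r; have := sqr_ge0 (1 - t); lra.
Qed.
Lemma sig_cont : continuous sig.
Proof.
apply: cont_mul; first exact/cont_exp2/cont_id.
apply: cont_inv; first by move=> t; rewrite gt_eqF // den_pos.
apply: cont_add; first exact/cont_exp2/cont_id.
by apply/cont_exp2/cont_sub; [exact: cont_c|exact: cont_id].
Qed.
Lemma sig0 : sig 0 = 0.
Proof. by rewrite /sig expr0n /= mul0r. Qed.
Lemma sig1 : sig 1 = 1.
Proof. by rewrite /sig subrr expr0n /= addr0 expr1n divr1. Qed.

End Generic.


Definition gcone (R : realType) n (Qr : 'M[R]_n) : set ('rV[R]_n * 'rV[R]_n) :=
  [set p | gb Qr p.1 p.1 = gb Qr p.2 p.2 /\ gb Qr p.1 p.2 = 0 /\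
           0 < gb Qr p.1 p.1 + gb Qr p.2 p.2].

Section PathSec.
Variables (R : realType) (n : nat) (Qr : 'M[R]_n) (e x y : 'rV[R]_n).
Hypothesis Qs : Qr^T = Qr.
Hypothesis ee : gb Qr e e = -2.
Let r := gb Qr x x.
Let a := gb Qr x e.
Let b := gb Qr y e.
Definition sA (t : R) := sig t - sig t ^+ 2 / 2.
Definition Aa t := r + a ^+ 2 * sA t.
Definition Bb t := a * b * sA t.
Definition Cc t := r + b ^+ 2 * sA t.
Definition Dl t := Aa t * Cc t - Bb t ^+ 2.
Definition qq t := Num.sqrt (Dl t).
Definition PX t := x + (sig t * a / 2) *: e.
Definition PY0 t := y + (sig t * b / 2) *: e.
Definition PY t := (Aa t / qq t) *: PY0 t - (Bb t / qq t) *: PX t.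

Hypothesis hc : gcone Qr (x, y).

Lemma sA_ge0 t : 0 <= sA t.
Proof. have /andP[h0 h1] := sig01 t; rewrite /sA; nra. Qed.

Lemma r_pos : 0 < r.
Proof. by case: hc => /= h1 [h2 h3]; rewrite /r; lra. Qed.

Lemma Dl_pos t : 0 < Dl t.
Proof.
have hr := r_pos; have hs := sA_ge0 t.
rewrite /Dl /Aa /Bb /Cc.
have ha := sqr_ge0 a; have hb := sqr_ge0 b.
have h1 : 0 <= r * sA t * (a ^+ 2 + b ^+ 2) by apply: mulr_ge0; [apply: mulr_ge0; lra|lra].
have -> : (r + a ^+ 2 * sA t) * (r + b ^+ 2 * sA t) - (a * b * sA t) ^+ 2 =
   r * r + r * sA t * (a ^+ 2 + b ^+ 2) by ring.
nra.
Qed.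

Lemma qq_pos t : 0 < qq t.
Proof. by rewrite /qq sqrtr_gt0 Dl_pos. Qed.

Lemma qq_sq t : qq t ^+ 2 = Dl t.
Proof. by rewrite /qq sqr_sqrtr // ltW // Dl_pos. Qed.

Lemma gsym u v : gb Qr u v = gb Qr v u.
Proof. exact: gb_sym. Qed.

Lemma xy0 : gb Qr x y = 0.
Proof. by case: hc => /= h1 [h2 h3]. Qed.
Lemma yy : gb Qr y y = r.
Proof. by case: hc => /= h1 [h2 h3]. Qed.

Lemma PXX t : gb Qr (PX t) (PX t) = Aa t.
Proof.
rewrite /PX !gbDl !gbDr !gbZl !gbZr (gsym e x) ee -/a -/r /Aa /sA.
by by field.
Qed.
Lemma PXY0 t : gb Qr (PX t) (PY0 t) = Bb t.
Proof.
rewrite /PX /PY0 !gbDl !gbDr !gbZl !gbZr (gsym e y) ee xy0 -/a -/b /Bb /sA.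
by field.
Qed.
Lemma PY0Y0 t : gb Qr (PY0 t) (PY0 t) = Cc t.
Proof.
rewrite /PY0 !gbDl !gbDr !gbZl !gbZr (gsym e y) ee yy -/b /Cc /sA.
by field.
Qed.

Lemma path_in_cone t : gcone Qr (PX t, PY t).
Proof.
have hq := qq_pos t; have hq2 := qq_sq t; have hD := Dl_pos t.
have hr := r_pos; have hs := sA_ge0 t.
have hA : 0 < Aa t by rewrite /Aa; have := sqr_ge0 a; nra.
have eXY : gb Qr (PX t) (PY t) = 0.
  rewrite /PY gbBr !gbZr PXY0 PXX; field; lra.
have eYY : gb Qr (PY t) (PY t) = Aa t.
  rewrite /PY !gbBl !gbBr !gbZl !gbZr PXX PY0Y0 (gsym (PY0 t) (PX t)) PXY0.
  rewrite /Dl in hq2.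
  have hq0 : qq t != 0 by rewrite gt_eqF.
  rewrite [LHS](_ : _ = (Aa t * (Aa t * Cc t - Bb t ^+ 2)) / qq t ^+ 2); last by field.
  by rewrite hq2 mulfK // gt_eqF.
split => /=; first by rewrite PXX eYY.
by split => //; rewrite PXX eYY; lra.
Qed.

Lemma sA_cont : continuous (fun t => sA t).
Proof.
rewrite /sA; apply: cont_sub; first exact: sig_cont.
by apply: cont_mul; [exact/cont_exp2/sig_cont|exact: cont_c].
Qed.
Lemma Aa_cont : continuous (fun t => Aa t).
Proof. by rewrite /Aa; apply: cont_add; [exact: cont_c|apply: cont_mul; [exact: cont_c|exact: sA_cont]]. Qed.
Lemma Bb_cont : continuous (fun t => Bb t).
Proof. by rewrite /Bb; apply: cont_mul; [exact: cont_c|exact: sA_cont]. Qed.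
Lemma Cc_cont : continuous (fun t => Cc t).
Proof. by rewrite /Cc; apply: cont_add; [exact: cont_c|apply: cont_mul; [exact: cont_c|exact: sA_cont]]. Qed.
Lemma qinv_cont : continuous (fun t => (qq t)^-1).
Proof.
apply: cont_inv; first by move=> t; rewrite gt_eqF // qq_pos.
rewrite /qq; apply: cont_sqrt; rewrite /Dl.
apply: cont_sub; first by apply: cont_mul; [exact: Aa_cont|exact: Cc_cont].
exact/cont_exp2/Bb_cont.
Qed.
Lemma PX_cont : continuous (fun t => PX t).
Proof.
rewrite /PX; apply: vcont_add; first exact: vcont_c.
apply: vcont_scale; last exact: vcont_c.
by apply: cont_mul; [apply: cont_mul; [exact: sig_cont|exact: cont_c]|exact: cont_c].
Qed.
Lemma PY0_cont : continuous (fun t => PY0 t).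
Proof.
rewrite /PY0; apply: vcont_add; first exact: vcont_c.
apply: vcont_scale; last exact: vcont_c.
by apply: cont_mul; [apply: cont_mul; [exact: sig_cont|exact: cont_c]|exact: cont_c].
Qed.
Lemma path_cont : continuous (fun t => (PX t, PY t)).
Proof.
apply: vcont_pair; first exact: PX_cont.
rewrite /PY; apply: vcont_sub; apply: vcont_scale.
- by apply: cont_mul; [exact: Aa_cont|exact: qinv_cont].
- exact: PY0_cont.
- by apply: cont_mul; [exact: Bb_cont|exact: qinv_cont].
- exact: PX_cont.
Qed.

Lemma path0 : (PX 0, PY 0) = (x, y).
Proof.
have hr := r_pos.
have s0 : sA 0 = 0 by rewrite /sA sig0 expr0n /= mul0r subr0.
have q0 : qq 0 = r.
  rewrite /qq /Dl /Aa /Bb /Cc s0 !mulr0 !addr0 expr0n /= subr0.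
  by rewrite sqrtr_sqr ger0_norm // ltW.
rewrite /PY /PX /PY0 q0 /Aa /Bb s0 sig0 !mulr0 !addr0 !mul0r.
have z0 : forall v : 'rV[R]_n, (0 : R) *: v = 0 by move=> v; apply/rowP => i; rewrite !mxE mul0r.
by rewrite !z0 !addr0 divff ?gt_eqF // scale1r subr0.
Qed.

Lemma path1 : gb Qr (PX 1) e = 0 /\ gb Qr (PY 1) e = 0.
Proof.
have hX : gb Qr (PX 1) e = 0.
  by rewrite /PX gbDl gbZl ee sig1 -/a; field.
have hY0 : gb Qr (PY0 1) e = 0.
  by rewrite /PY0 gbDl gbZl ee sig1 -/b; field.
split => //.
by rewrite /PY gbBl !gbZl hX hY0 !mulr0 subr0.
Qed.

Lemma cone_path : connected_component (gcone Qr) (x, y) (PX 1, PY 1).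
Proof.
rewrite -path0; apply: (cc_path (f := fun t => (PX t, PY t))).
  exact: path_cont.
by move=> t _; exact: path_in_cone.
Qed.
End PathSec.

End Wrap.

Local Notation R := Rdefinitions.R.


Lemma gb_map n (M : 'M[int]_n) (a b : 'rV[int]_n) :
  gb (map_mx intr M : 'M[R]_n) (map_mx intr a) (map_mx intr b) = intr (gb M a b).
Proof. by rewrite /gb map_trmx -!map_mxM mxE. Qed.

Lemma cone_iso n (Qr : 'M[R]_n) (G : 'M[R]_n) : G *m Qr *m G^T = Qr ->
  forall p, gcone Qr p -> gcone Qr (p.1 *m G, p.2 *m G).
Proof. by move=> hG [u w]; rewrite /gcone /= !gb_mul hG. Qed.

Theorem lemmaA1 (d : 'rV[int]_12) (hd : bil gramLambda d d = -2)
  (B : 'M[int]_(11, 12)) (hB : Zbasis_perp d B)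
  (h : 'M[int]_11) (hh : Oplus (gramPerp B) h) :
  exists g : 'M[int]_12,
    Oplus gramLambda g /\ d *m g = d /\ B *m g = h *m B.
Proof.
case: hh => /andP[hu /eqP hiso] hcc.
have [g [[gu giso dg Bg] [Dc [z DCz]]]] := alg_ext hd hB hu hiso.
exists g; split; last by [].
split; first by rewrite /orthogonal_group gu giso eqxx.
set QR : 'M[R]_12 := map_mx intr gramLambda.
set GR : 'M[R]_12 := map_mx intr g.
set BR : 'M[R]_(11, 12) := map_mx intr B.
set HR : 'M[R]_11 := map_mx intr h.
set dR : 'rV[R]_12 := map_mx intr d.
have QRs : QR^T = QR by rewrite /QR map_trmx gram_sym.
have hd' : gb gramLambda d d = -2 := hd.
have dd : gb QR dR dR = -2 by rewrite gb_map hd' rmorphN rmorph_nat.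
have GRiso : GR *m QR *m GR^T = QR by rewrite /GR /QR map_trmx -!map_mxM giso.
have BGR : BR *m GR = HR *m BR by rewrite /BR /GR /HR -!map_mxM Bg.
have PR : map_mx intr (gramPerp B) = BR *m QR *m BR^T.
  by rewrite /gramPerp /BR /QR map_trmx !map_mxM.
have DCR : map_mx intr Dc *m BR + QR *m dR^T *m map_mx intr z = 1%:M.
  by rewrite /BR /QR /dR map_trmx -!map_mxM -map_mxD DCz map_mx1.
have coord : forall X : 'rV[R]_12, gb QR X dR = 0 -> X = (X *m map_mx intr Dc) *m BR.
  move=> X hX; rewrite -mulmxA -[X in X = _]mulmx1 -DCR mulmxDr.
  have -> : X *m (QR *m dR^T *m map_mx intr z) = 0.
    by rewrite !mulmxA [X *m QR *m dR^T]mx11_scalar -/(gb QR X dR) hX mul_scalar_mx scale0r.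
  by rewrite addr0.
move=> [x y] hp.
change (gcone QR (x, y)) in hp.
change (connected_component (gcone QR) (x, y) (x *m GR, y *m GR)).
have cc1 := cone_path QRs dd hp.
have [p1 p2] := path1 x y dd.
set X1 := PX QR dR x 1 in cc1 p1; set Y1 := PY QR dR x y 1 in cc1 p2.
have cX1 := coord X1 p1; have cY1 := coord Y1 p2.
set c1 := X1 *m map_mx intr Dc in cX1; set c2 := Y1 *m map_mx intr Dc in cY1.
have hX1 : gcone QR (X1, Y1) by apply: path_in_cone.
have hN : period_cone (gramPerp B) (c1, c2).
  change (gcone (map_mx intr (gramPerp B)) (c1, c2)).
  by rewrite /gcone /= PR -!gb_mul -cX1 -cY1.
have cc2 := hcc _ hN.
have mapN : forall p, period_cone (gramPerp B) p -> gcone QR (p.1 *m BR, p.2 *m BR).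
  move=> [u w] hu'; change (gcone (map_mx intr (gramPerp B)) (u, w)) in hu'.
  by move: hu'; rewrite /gcone /= PR -!gb_mul.
have cc2' := cc_map (pair_mulmx_cont (M := BR)) mapN cc2.
rewrite /= -!mulmxA -BGR !mulmxA -cX1 -cY1 in cc2'.
have cc3 := cc_map (pair_mulmx_cont (M := GR)) (cone_iso GRiso) cc1.
rewrite /= in cc3.
apply: connected_component_trans cc1 _.
apply: connected_component_trans cc2' _.
exact: connected_component_sym.
Qed.
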